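(* Let $n\ge 2$ and let $A\in\mathbb{R}^{n\times n}$ be the tridiagonal Toeplitz matrix with all diagonal entries equal to $b\ge 0$, all subdiagonal entries ($A_{i+1,i}$) equal to $a\ge 0$, all superdiagonal entries ($A_{i,i+1}$) equal to $c\ge0$, and all other entries zero, where $\max(a,c)>0$. Let $r(t):=r\big((1-t)A+tA^{\top}\big)$. Then on $t\in(0,1)$, $r(t)$ is concave in $t$, nondecreasing on $(0,1/2)$ and nonincreasing on $(1/2,1)$; moreover, when $a\neq c$, $r$ is strictly concave on $(0,1)$, strictly increasing on $(0,1/2)$, and strictly decreasing on $(1/2,1)$.
   Context: $r(M)$ denotes the spectral radius of a square matrix $M$. *)

(* Defs.v *)
From HB Require Import structures.
From mathcomp Require Import all_boot all_order all_algebra.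
From mathcomp Require Import complex.
From mathcomp Require Import classical_sets reals.
Set Implicit Arguments. Unset Strict Implicit. Unset Printing Implicit Defensive.
Import Order.TTheory GRing.Theory Num.Theory.
Local Open Scope ring_scope.
Local Open Scope classical_set_scope.

(* Spectral radius r(M) of a real square matrix: the supremum (= maximum,
   the set being finite) of the moduli |z| (Re of the norm of R[i], which is real) of the complex eigenvalues z of M,
   i.e. of the complex roots of the characteristic polynomial of M. *)
Definition spectral_radius (R : realType) (n : nat) (M : 'M[R]_n) : R :=
  sup [set @complex.Re R `|z| | z in
        [set z : R[i] | root (char_poly (map_mx (real_complex R) M)) z]].

Definition tridiag_toeplitz (R : realType) (n : nat) (a b c : R) : 'M[R]_n :=
  \matrix_(i < n, j < n)
    (if i == j :> nat then b
     else if i == j.+1 :> nat then a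
     else if i.+1 == j :> nat then c
     else 0).

Definition rfun (R : realType) (n : nat) (A : 'M[R]_n) (t : R) : R :=
  spectral_radius ((1 - t) *: A + t *: A^T).

Definition concave_on (R : realType) (D : set R) (f : R -> R) : Prop :=
  forall s t l, D s -> D t -> 0 <= l <= 1 ->
    (1 - l) * f s + l * f t <= f ((1 - l) * s + l * t).

Definition strictly_concave_on (R : realType) (D : set R) (f : R -> R) : Prop :=
  forall s t l, D s -> D t -> s != t -> 0 < l < 1 ->
    (1 - l) * f s + l * f t < f ((1 - l) * s + l * t).

Definition nondecreasing_on (R : realType) (D : set R) (f : R -> R) : Prop :=
  forall s t, D s -> D t -> s <= t -> f s <= f t.
Definition nonincreasing_on (R : realType) (D : set R) (f : R -> R) : Prop :=
  forall s t, D s -> D t -> s <= t -> f t <= f s.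
Definition strictly_increasing_on (R : realType) (D : set R) (f : R -> R) : Prop :=
  forall s t, D s -> D t -> s < t -> f s < f t.
Definition strictly_decreasing_on (R : realType) (D : set R) (f : R -> R) : Prop :=
  forall s t, D s -> D t -> s < t -> f t < f s.

Definition oint (R : realType) (x y : R) : set R := [set t | x < t < y].

(* Main.v *)
Require Import Defs.
From HB Require Import structures.
From mathcomp Require Import all_boot all_order all_algebra.
From mathcomp Require Import complex.
From mathcomp Require Import classical_sets reals.
From mathcomp Require Import trigo.
From mathcomp Require Import zify ring lra.
Set Implicit Arguments. Unset Strict Implicit. Unset Printing Implicit Defensive.
Import Order.TTheory GRing.Theory Num.Theory.
Local Open Scope ring_scope.

Definition tri (F : pzRingType) (n : nat) (x y z : F) : 'M[F]_n :=
  \matrix_(i < n, j < n)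
    (if i == j :> nat then y
     else if i == j.+1 :> nat then x
     else if i.+1 == j :> nat then z
     else 0).

Section Eig.
Variable F : fieldType.
Variable n : nat.

Lemma eig_conj (M P Q : 'M[F]_n) z : Q *m P = 1%:M ->
  eigenvalue M z -> eigenvalue (P *m M *m Q) z.
Proof.
move=> QP /eigenvalueP [v vM v0]; apply/eigenvalueP; exists (v *m Q).
  by rewrite !mulmxA -(mulmxA v) QP mulmx1 vM scalemxAl.
apply: contra v0 => /eqP h; have := congr1 (mulmx^~ P) h.
by rewrite -mulmxA QP mulmx1 mul0mx => ->.
Qed.

Lemma tri_scale1 (e x y z w : F) : e != 0 ->
  eigenvalue (tri n x y z) w -> eigenvalue (tri n (e * x) y (e^-1 * z)) w.
Proof.
move=> e0 h.
have -> : tri n (e * x) y (e^-1 * z) =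
   diag_mx (\row_(i < n) e ^+ i) *m tri n x y z *m diag_mx (\row_(i < n) e^-1 ^+ i).
  apply/matrixP => i j; rewrite mul_diag_mx mul_mx_diag !mxE.
  have ee : forall k, e ^+ k * e^-1 ^+ k = 1 by move=> k; rewrite -exprMn mulfV // expr1n.
  case: (i =P j :> nat) => [/val_inj ->|ij]; first by rewrite mulrAC ee mul1r.
  case: (i =P j.+1 :> nat) => [ij1|nij1].
    rewrite ij1 exprS; have := ee j; move: (e ^+ j) (e^-1 ^+ j) => u v uv.
    by rewrite -[LHS]mulr1 -uv; ring.
  case: (i.+1 =P j :> nat) => [ij1|nij2]; last by rewrite mulr0 mul0r.
  rewrite -ij1 exprS; have := ee i; move: (e ^+ i) (e^-1 ^+ i) => u v uv.
  by rewrite -[LHS]mul1r -uv; ring.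
apply: eig_conj h; apply/matrixP => i j.
rewrite mul_diag_mx !mxE; case: eqP => [->|]; last by rewrite !mulr0.
by rewrite mulr1n -exprMn mulVf // expr1n.
Qed.

Lemma tri_scale (e x y z w : F) : e != 0 ->
  eigenvalue (tri n (e * x) y (e^-1 * z)) w = eigenvalue (tri n x y z) w.
Proof.
move=> e0; apply/idP/idP; last exact: tri_scale1.
move=> /(tri_scale1 (e:=e^-1)); rewrite invr_neq0 // invrK mulrA mulVf // mulrA mulfV //.
by rewrite !mul1r; apply.
Qed.

Lemma tri_sym (s y w : F) : s != 0 ->
  eigenvalue (tri n s y s) w = eigenvalue (tri n 1 0 1) ((w - y) / s).
Proof.
move=> s0.
have -> : tri n s y s = y%:M + s *: tri n 1 0 1.
  apply/matrixP => i j; rewrite !mxE.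
  case: (i =P j :> nat) => [/val_inj ->|ij]; first by rewrite eqxx mulr1n mulr0 addr0.
  rewrite (_ : (i == j) = false) ?mulr0n ?add0r; last by apply/eqP => h; apply: ij; rewrite h.
  case: (i =P j.+1 :> nat) => _; first by rewrite mulr1.
  by case: (i.+1 =P j :> nat) => _; rewrite ?mulr1 ?mulr0.
apply/eigenvalueP/eigenvalueP => -[v vM v0]; exists v => //.
  move: vM; rewrite mulmxDr mul_mx_scalar -scalemxAr => /(congr1 (fun u => u - y *: v)).
  rewrite addrC addKr -scalerBl => /(congr1 (fun u => s^-1 *: u)).
  by rewrite !scalerA mulVf // scale1r mulrC.
by rewrite mulmxDr mul_mx_scalar -scalemxAr vM scalerA mulrC mulfVK // -scalerDl addrC subrK.
Qed.

Lemma tri_neg (w : F) :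
  eigenvalue (tri n 1 0 1) w -> eigenvalue (tri n 1 0 1) (- w).
Proof.
have n1 : (-1 : F) != 0 by rewrite oppr_eq0 oner_eq0.
rewrite -(tri_scale _ _ _ _ n1) invrN1 mulr1 tri_sym // subr0.
by rewrite invrN1 mulrN1.
Qed.

Lemma triT (x y : F) : (tri n x y x)^T = tri n x y x.
Proof.
apply/matrixP => i j; rewrite !mxE.
by do !(case: ifP => /eqP ?); try lia.
Qed.

End Eig.

Lemma seq_max (R : realDomainType) (s : seq R) : s != [::] ->
  exists2 m, m \in s & forall y, y \in s -> y <= m.
Proof.
elim: s => // x [|y s] IH _.
  by exists x; [rewrite mem_seq1|move=> z; rewrite mem_seq1 => /eqP->].
case: (IH isT) => m ms hm; case: (lerP x m) => hxm.
  exists m; first by rewrite in_cons ms orbT.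
  by move=> z; rewrite in_cons => /orP [/eqP->//|/hm].
exists x; first by rewrite mem_head.
move=> z; rewrite in_cons => /orP [/eqP->//|/hm h]; exact: le_trans h (ltW hxm).
Qed.

Section Cplx.
Variable R : rcfType.
Variable n : nat.
Local Notation C := (R[i]).
Local Open Scope complex_scope.

Lemma tri_real (mu : C) : eigenvalue (tri n 1 0 1) mu -> mu = (complex.Re mu)%:C.
Proof.
move=> /eigenvalueP [v vM v0].
set J := tri n 1 0 1 in vM.
set w := map_mx conjc v.
have Jc : map_mx conjc J = J.
  by apply/matrixP => i j; rewrite !mxE; do !(case: ifP => _); rewrite ?rmorph0 ?rmorph1.
have h2 : w *m J = mu^*%C *: w.
  have := congr1 (map_mx conjc) vM; rewrite map_mxM Jc => ->.
  by apply/matrixP => i j; rewrite !mxE rmorphM.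
have e1 : v *m J *m w^T = mu *: (v *m w^T) by rewrite vM scalemxAl.
have e2 : v *m J *m w^T = mu^*%C *: (v *m w^T).
  have JT : J^T = J by rewrite /J triT.
  by rewrite -mulmxA -{1}JT -trmx_mul h2 linearZ /= scalemxAr.
have X0 : (v *m w^T) 0 0 != 0.
  rewrite !mxE; apply/negP => /eqP h; apply/negP: v0; rewrite negbK.
  have := (psumr_eq0P (fun i _ => mulcJ_ge0 (v 0 i))).
  rewrite (eq_bigr (fun i => v 0 i * (v 0 i)^*%C)) in h; last by move=> i _; rewrite !mxE.
  move=> /(_ xpredT h) hv; apply/eqP/matrixP => i j; rewrite !mxE (ord1 i).
  by have /eqP := hv j isT; rewrite mulf_eq0 conjc_eq0 orbb => /eqP.
have e3 : (mu - mu^*%C) *: (v *m w^T) = 0 by rewrite scalerBl -e1 -e2 subrr.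
have := congr1 (fun M : 'M_1 => M 0 0) e3.
rewrite /= [LHS]mxE [RHS]mxE => /eqP; rewrite mulf_eq0 (negbTE X0) orbF subr_eq0.
case: mu {vM e1 e2 e3 h2} => p q /eqP [] /eqP; rewrite -subr_eq0 opprK -mulr2n mulrn_eq0 /= => /eqP ->.
done.
Qed.

Lemma spec_bound : (0 < n)%N -> exists K : R,
  eigenvalue (tri n 1 0 1 : 'M[C]_n) K%:C /\ forall mu, eigenvalue (tri n 1 0 1 : 'M[C]_n) mu -> `|complex.Re mu| <= K.
Proof.
move=> n0; set J := (tri n 1 0 1 : 'M[C]_n).
have [mu0 hmu0] := eigenvalue_closed J n0.
have [rs hrs] := closed_field_poly_normal (char_poly J).
rewrite (monicP (char_poly_monic J)) scale1r in hrs.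
have inrs : forall mu, eigenvalue J mu = (mu \in rs).
  by move=> mu; rewrite eigenvalue_root_char hrs root_prod_XsubC.
case: (@seq_max R [seq complex.Re z | z <- rs]) => [|m mIn mMax].
  by move: hmu0; rewrite inrs; case: (rs).
move/mapP: mIn => [z0 z0rs mE]; subst m; exists (complex.Re z0); split.
  have hz : eigenvalue J z0 by rewrite inrs.
  by rewrite -(tri_real hz).
move=> mu hmu; rewrite ler_norml; apply/andP; split.
  rewrite lerNl; have -> : - complex.Re mu = complex.Re (- mu) by case: (mu).
  apply: mMax; apply: map_f; rewrite -inrs; exact: tri_neg.
by apply: mMax; apply: map_f; rewrite -inrs.
Qed.

End Cplx.

Lemma sum_if (V : nmodType) n k (x : V) :
  \sum_(i < n) (if (i : nat) == k then x else 0) = if (k < n)%N then x else 0.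
Proof.
case: ifP => kn.
  rewrite (bigD1 (Ordinal kn)) //= eqxx big1 ?addr0 // => i ne.
  case: eqP => // h; move: ne; rewrite (_ : i = Ordinal kn) ?eqxx //; exact: val_inj.
by apply: big1 => i _; case: eqP => // h; move: (ltn_ord i); rewrite h kn.
Qed.

Lemma trig_eig (R : realType) n : (0 < n)%N ->
  eigenvalue (tri n 1 0 1 : 'M[R]_n) (2 * cos (pi / n.+1%:R)).
Proof.
move=> n0; set th := pi / n.+1%:R.
set f := fun k : nat => sin (k%:R * th).
have f0 : f 0%N = 0 by rewrite /f mul0r sin0.
have fn : f n.+1 = 0 by rewrite /f mulrC /th divfK ?sinpi // pnatr_eq0.
have frec : forall k, f k.+2 + f k = 2 * cos th * f k.+1.
  move=> k; rewrite /f.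
  have e1 : (k.+2)%:R * th = k.+1%:R * th + th by rewrite mulrSr mulrDl mul1r.
  have e2 : k%:R * th = k.+1%:R * th - th by rewrite mulrSr mulrDl mul1r addrK.
  rewrite e1 e2 sinD sinB; ring.
apply/eigenvalueP; exists (\row_(j < n) f j.+1).
  apply/matrixP => i j; rewrite (ord1 i) !mxE.
  transitivity (\sum_(k < n) ((if (k:nat) == j.+1 then f j.+2 else 0) +
     (if (k:nat) == j.-1 then (if (0 < j)%N then f j else 0) else 0))).
    apply: eq_bigr => k _; rewrite !mxE.
    do !(case: ifP => ?); rewrite ?mulr0 ?mulr1 ?addr0 ?add0r;
      try (by []); try (congr f; lia); try lia.
  rewrite big_split /= !sum_if.
  have -> : (j.-1 < n)%N by case: (j : nat) (ltn_ord j) => //= m; apply: ltnW.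
  have -> : (if (0 < j)%N then f j else 0) = f j by case: (j : nat) => //.
  have -> : (if (j.+1 < n)%N then f j.+2 else 0) = f j.+2.
    case: ifP => // /negbT; rewrite -leqNgt => h.
    have -> : j.+2 = n.+1 by have := ltn_ord j; lia.
    by rewrite fn.
  by rewrite frec.
apply/eqP => /matrixP /(_ 0 (Ordinal n0)); rewrite !mxE /f mul1r => /eqP.
apply/negP; rewrite gt_eqF // sin_gt0_pi // /th; apply/andP; split.
  by rewrite divr_gt0 ?pi_gt0 ?ltr0n.
by rewrite ltr_pdivrMr ?ltr0n // ltr_pMr ?pi_gt0 // ltr1n.
Qed.

Lemma sup_max (R : realType) (X : set R) m :
  X m -> (forall x, X x -> x <= m) -> sup X = m.
Proof.
move=> Xm ub.
have -> : X = (X `|` [set m])%classic.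
  by apply/esym/setUidPl => x /= ->.
rewrite sup_setU ?sup1 //.
by move=> x y /ub xm ->.
Qed.

Lemma Kpos (R : realType) n : (2 <= n)%N -> exists K : R,
  [/\ 0 < K, eigenvalue (tri n 1 0 1 : 'M[R[i]]_n) (K%:C)%C &
  forall mu, eigenvalue (tri n 1 0 1 : 'M[R[i]]_n) mu -> `|complex.Re mu| <= K].
Proof.
move=> n2; have n0 : (0 < n)%N by lia.
have [K [KJ Kb]] := spec_bound R n0.
exists K; split => //.
have := trig_eig R n0.
rewrite -(eigenvalue_map (real_complex R)).
have -> : ((tri n 1 0 1 : 'M[R]_n) ^ (real_complex R))%sesqui = tri n 1 0 1.
  by apply/matrixP => i j; rewrite !mxE; do !(case: ifP => _); rewrite ?rmorph0 ?rmorph1.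
have hc : 0 < cos (pi / n.+1%:R :> R).
  apply: cos_gt0_pihalf; apply/andP; split.
    apply: (@lt_trans _ _ 0); first by rewrite oppr_lt0 divr_gt0 ?pi_gt0 ?ltr0n.
    by rewrite divr_gt0 ?pi_gt0 ?ltr0n.
  rewrite ltr_pM2l ?pi_gt0 // ltf_pV2 ?posrE ?ltr0n // ltr_nat; lia.
move=> /Kb /=; apply: lt_le_trans.
by rewrite normrM ger0_norm // ?mulr_gt0 // ?ltr0n // gtr0_norm.
Qed.

Lemma Mt_eq (R : realType) n (a b c t : R) :
  (1 - t) *: tridiag_toeplitz n a b c + t *: (tridiag_toeplitz n a b c)^T
  = tridiag_toeplitz n ((1-t)*a + t*c) b ((1-t)*c + t*a).
Proof.
apply/matrixP => i j; rewrite !mxE.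
do !(case: ifP => ?); rewrite ?mulr0 ?addr0; (ring || lia).
Qed.

Lemma map_tt (R : realType) n (a b c : R) :
  ((tridiag_toeplitz n a b c) ^ (real_complex R))%sesqui =
  tri n (a%:C)%C (b%:C)%C (c%:C)%C.
Proof.
by apply/matrixP => i j; rewrite !mxE; do !(case: ifP => _); rewrite ?rmorph0.
Qed.

Lemma normC_real (R : rcfType) (x : R) : complex.Re `|(x%:C)%C| = `|x|.
Proof. by rewrite normc_def /= expr0n /= addr0 sqrtr_sqr. Qed.

Lemma rfun_eq (R : realType) n (a b c K t : R) :
  0 <= b -> 0 < (1-t)*a + t*c -> 0 < (1-t)*c + t*a -> 0 <= K ->
  eigenvalue (tri n 1 0 1 : 'M[R[i]]_n) (K%:C)%C ->
  (forall mu, eigenvalue (tri n 1 0 1 : 'M[R[i]]_n) mu -> `|complex.Re mu| <= K) ->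
  rfun (tridiag_toeplitz n a b c) t =
  b + K * Num.sqrt (((1-t)*a + t*c) * ((1-t)*c + t*a)).
Proof.
move=> b0 alp gap K0 KJ Kb.
rewrite /rfun /spectral_radius Mt_eq map_tt.
move: alp gap; set al := (1-t)*a + t*c; set ga := (1-t)*c + t*a => alp gap.
set s := Num.sqrt (al * ga).
have s0 : 0 < s by rewrite sqrtr_gt0 mulr_gt0.
have ss : s * s = al * ga by rewrite -expr2 sqr_sqrtr // mulr_ge0 // ltW.
have sC0 : (s%:C)%C != 0 :> R[i] by rewrite fmorph_eq0 gt_eqF.
have eqv : forall z : R[i], root (char_poly (tri n (al%:C)%C (b%:C)%C (ga%:C)%C)) z =
    eigenvalue (tri n 1 0 1 : 'M[R[i]]_n) ((z - (b%:C)%C) / (s%:C)%C).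
  move=> z; rewrite -eigenvalue_root_char.
  have e0 : ((s / al)%:C)%C != 0 :> R[i].
    by rewrite fmorph_eq0 mulf_neq0 ?invr_eq0 ?gt_eqF.
  rewrite -(tri_scale _ _ _ _ _ e0) -rmorphM -fmorphV -rmorphM.
  have -> : s / al * al = s by rewrite divfK // gt_eqF.
  have -> : (s / al)^-1 * ga = s by rewrite invf_div mulrAC -ss mulfK // gt_eqF.
  exact: tri_sym.
apply: sup_max.
  exists ((b + K * s)%:C)%C; first rewrite /= eqv.
    rewrite -rmorphB -fmorphV -rmorphM.
    by rewrite (_ : (b + K * s - b) / s = K) // addrC addKr mulfK // gt_eqF.
  by rewrite normC_real ger0_norm // addr_ge0 // mulr_ge0 // ltW.
move=> x [z hz <-]; rewrite /= eqv in hz.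
have zE : z = (b + s * complex.Re ((z - (b%:C)%C) / (s%:C)%C))%:C%C.
  transitivity ((b%:C)%C + (s%:C)%C * ((z - (b%:C)%C) / (s%:C)%C)).
    by rewrite mulrC divfK // addrC subrK.
  by rewrite {1}(tri_real hz) -rmorphM -rmorphD.
rewrite zE normC_real; apply: (le_trans (ler_normD _ _)).
rewrite ger0_norm // normrM gtr0_norm // lerD2l [K * s]mulrC ler_pM2l //.
exact: Kb.
Qed.

Lemma sqrt_conc (R : realType) (x y l : R) : 0 <= x -> 0 <= y -> 0 <= l <= 1 ->
  (1 - l) * Num.sqrt x + l * Num.sqrt y <= Num.sqrt ((1 - l) * x + l * y).
Proof.
move=> x0 y0 /andP [l0 l1].
have u0 := sqrtr_ge0 x; have v0 := sqrtr_ge0 y.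
have hx := sqr_sqrtr x0; have hy := sqr_sqrtr y0.
move: u0 v0 hx hy; set u := Num.sqrt x; set v := Num.sqrt y => u0 v0 hx hy.
have L0 : 0 <= (1 - l) * u + l * v by rewrite addr_ge0 // mulr_ge0 // subr_ge0.
rewrite -(ger0_norm L0) -sqrtr_sqr ler_sqrt; last first.
  by rewrite addr_ge0 // mulr_ge0 // subr_ge0.
rewrite -hx -hy.
have h : 0 <= l * (1 - l) * (u - v) ^+ 2.
  by apply: mulr_ge0; [apply: mulr_ge0; rewrite ?subr_ge0 | apply: sqr_ge0].
rewrite -subr_ge0 (_ : _ - _ = l * (1 - l) * (u - v) ^+ 2) //; ring.
Qed.

Lemma mid_in (R : realType) (s t l : R) : 0 < s < 1 -> 0 < t < 1 -> 0 <= l <= 1 ->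
  0 < (1 - l) * s + l * t < 1.
Proof.
move=> /andP [s0 s1] /andP [t0 t1] /andP [l0 l1].
have e1 : (1 - l) * s + l * t = s + l * (t - s) by ring.
have e2 : (1 - l) * s + l * t = t - (1 - l) * (t - s) by ring.
case: (lerP s t) => st.
  have h1 : 0 <= l * (t - s) by rewrite mulr_ge0 // subr_ge0.
  have h2 : 0 <= (1 - l) * (t - s) by rewrite mulr_ge0 // subr_ge0.
  apply/andP; split; [rewrite e1|rewrite e2]; lra.
have h1 : 0 <= l * (s - t) by apply: mulr_ge0; rewrite // subr_ge0 ltW.
have h2 : 0 <= (1 - l) * (s - t) by apply: mulr_ge0; rewrite subr_ge0 // ltW.
have e3 : l * (t - s) = - (l * (s - t)) by ring.
have e4 : (1 - l) * (t - s) = - ((1 - l) * (s - t)) by ring.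
apply/andP; split; [rewrite e2 e4|rewrite e1 e3]; lra.
Qed.

Unset Implicit Arguments.

Theorem theorem2 (R : realType) (n : nat) (a b c : R) :
  (2 <= n)%N -> 0 <= a -> 0 <= b -> 0 <= c -> 0 < Num.max a c ->
  let r := rfun (tridiag_toeplitz n a b c) in
  [/\ concave_on (oint 0 1) r,
      nondecreasing_on (oint 0 (1/2)) r,
      nonincreasing_on (oint (1/2) 1) r &
      (a != c ->
       [/\ strictly_concave_on (oint 0 1) r,
           strictly_increasing_on (oint 0 (1/2)) r &
           strictly_decreasing_on (oint (1/2) 1) r])].
Proof.
move=> n2 a0 b0 c0 mx r.
have [K [K0 KJ Kb]] := Kpos R n2.
have ac : 0 < a \/ 0 < c.
  case: (lerP a c) mx => h; rewrite ?(max_idPr h) ?(max_idPl (ltW h)) => h'; by [right|left].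
pose q t := ((1-t)*a + t*c) * ((1-t)*c + t*a).
pose g t := Num.sqrt (q t).
have qE : forall t, q t = a * c + (a - c) ^+ 2 * (t * (1 - t)) by move=> t; rewrite /q; ring.
have hpos : forall t, 0 < t < 1 -> 0 < (1-t)*a + t*c /\ 0 < (1-t)*c + t*a.
  move=> t /andP [t0 t1]; case: ac => h; split; nra.
have qpos : forall t, 0 < t < 1 -> 0 < q t.
  by move=> t /hpos [h1 h2]; rewrite /q mulr_gt0.
have rE : forall t, 0 < t < 1 -> r t = b + K * g t.
  move=> t /hpos [h1 h2]; exact: rfun_eq (ltW K0) KJ Kb.
have d0 : 0 <= (a - c) ^+ 2 by apply: sqr_ge0.
have qconc : forall s t l, 0 <= l <= 1 ->
    q ((1 - l) * s + l * t) - ((1 - l) * q s + l * q t) =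
    (a - c) ^+ 2 * (l * (1 - l) * (s - t) ^+ 2).
  by move=> s t l _; rewrite !qE; ring.
have qmono : forall s t, q t - q s = (a - c) ^+ 2 * ((t - s) * (1 - s - t)).
  by move=> s t; rewrite !qE; ring.
have gconc : forall s t l, 0 < s < 1 -> 0 < t < 1 -> 0 <= l <= 1 ->
    (1 - l) * g s + l * g t <= g ((1 - l) * s + l * t).
  move=> s t l hs ht hl; apply: le_trans (sqrt_conc _ _ _) _.
  - exact: ltW (qpos _ hs).
  - exact: ltW (qpos _ ht).
  - exact: hl.
  rewrite ler_sqrt; last first.
    by apply/ltW/qpos; apply: mid_in.
  rewrite -subr_ge0 qconc // mulr_ge0 //.
  by case/andP: hl => ? ?; apply: mulr_ge0; [apply: mulr_ge0; rewrite ?subr_ge0|apply: sqr_ge0].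
have gmono : forall s t, 0 < s -> s <= t -> t < 1 -> s + t <= 1 -> g s <= g t.
  move=> s t s0 st t1 st1; rewrite ler_sqrt; last by apply/ltW/qpos; apply/andP; split; lra.
  rewrite -subr_ge0 qmono mulr_ge0 // mulr_ge0 //; lra.
have gmono' : forall s t, 0 < s -> s <= t -> t < 1 -> 1 <= s + t -> g t <= g s.
  move=> s t s0 st t1 st1; rewrite ler_sqrt; last by apply/ltW/qpos; apply/andP; split; lra.
  rewrite -subr_ge0 -opprB qmono -mulrN mulr_ge0 // -mulrN mulr_ge0 //; lra.
split.
- move=> s t l hs ht hl.
  have hm : 0 < (1 - l) * s + l * t < 1.
    by apply: mid_in.
  rewrite !rE //.
  rewrite (_ : (1 - l) * (b + K * g s) + l * (b + K * g t) = b + K * ((1 - l) * g s + l * g t)); last by ring.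
  by rewrite lerD2l ler_wpM2l ?(ltW K0) // gconc.
- move=> s t /andP [s0 s1] /andP [t0 t1] st; rewrite !rE; try (apply/andP; split; lra).
  by rewrite lerD2l ler_wpM2l ?(ltW K0) // gmono //; lra.
- move=> s t /andP [s0 s1] /andP [t0 t1] st; rewrite !rE; try (apply/andP; split; lra).
  by rewrite lerD2l ler_wpM2l ?(ltW K0) // gmono' //; lra.
move=> ne.
have d1 : 0 < (a - c) ^+ 2 by rewrite lt_def sqrf_eq0 subr_eq0 ne sqr_ge0.
split.
- move=> s t l hs ht st hl.
  have hl' : 0 <= l <= 1 by case/andP: hl => ? ?; apply/andP; split; apply: ltW.
  have hm : 0 < (1 - l) * s + l * t < 1.
    by apply: mid_in.
  rewrite !rE //.
  rewrite (_ : (1 - l) * (b + K * g s) + l * (b + K * g t) = b + K * ((1 - l) * g s + l * g t)); last by ring.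
  rewrite ltrD2l ltr_pM2l //; apply: le_lt_trans (sqrt_conc _ _ _) _.
  - exact: ltW (qpos _ hs).
  - exact: ltW (qpos _ ht).
  - exact: hl'.
  rewrite ltr_sqrt; last exact: qpos.
  rewrite -subr_gt0 qconc //.
  rewrite mulr_gt0 // mulr_gt0 //; last by rewrite lt_def sqrf_eq0 subr_eq0 st sqr_ge0.
  by case/andP: hl => ? ?; apply: mulr_gt0; rewrite ?subr_gt0.
- move=> s t /andP [s0 s1] /andP [t0 t1] st; rewrite !rE; try (apply/andP; split; lra).
  rewrite ltrD2l ltr_pM2l // ltr_sqrt; last by apply: qpos; apply/andP; split; lra.
  by rewrite -subr_gt0 qmono mulr_gt0 // mulr_gt0 //; lra.
- move=> s t /andP [s0 s1] /andP [t0 t1] st; rewrite !rE; try (apply/andP; split; lra).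
  rewrite ltrD2l ltr_pM2l // ltr_sqrt; last by apply: qpos; apply/andP; split; lra.
  rewrite -subr_gt0 -opprB qmono -mulrN mulr_gt0 // -mulrN mulr_gt0 //; lra.
Qed.
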